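(* Assume the standing setting. Let $\epsilon>0$, fix a coarse index $j\in\mathbb Z$, and let $m$ be an integer with $1\le m\le r$. If $|u^0_i-u^0_{i+1}|\le \epsilon/3^{M}$ for all $i\in\mathbb Z$, then $$|v_m-u_m|\le \tfrac32 h+\tfrac34|d_1+d_2|+\big(\min[m,r-m]+3\big)\epsilon .$$
   Context: Standing setting. Let $F:\mathbb R\to\mathbb R$ be continuously differentiable. For a spatial step $\eta>0$, a time step $\tau>0$ and an initial sequence $(z^0_i)_{i\in\mathbb Z}$ of reals, the EFC (Euler forward in time, centered in space) scheme produces $(z^n_i)_{i\in\mathbb Z,\,n\in\mathbb N}$ by $z^{n+1}_i=z^n_i-F'(z^n_i)\frac{\tau}{2\eta}\,(z^n_{i+1}-z^n_{i-1})$. It satisfies the CFL condition if $|F'(z^n_i)|\,\tau/\eta\le 1$ for all $i\in\mathbb Z$, $n\in\mathbb N$. Fix $a\in\mathbb R$, $h>0$, $\Delta t>0$, an integer $N>1$ and an even integer $r\ge 2$; put $k=h/r$, $dt=\Delta t/r$, $M=Nr$. Let $u_0:\mathbb R\to\mathbb R$. The coarse solution $(w^n_j)$ is the EFC scheme with $\eta=h$, $\tau=\Delta t$, $w^0_j=u_0(a+jh)$; the fine solution $(u^n_i)$ is the EFC scheme with $\eta=k$, $\tau=dt$, $u^0_i=u_0(a+ik)$ (so $w^0_j=u^0_{jr}$). Both are assumed to satisfy the CFL condition. Coarse nodes: $x_j=a+jh$. Interpolant: for a fixed coarse index $j$, set $p_1=x_j$, $p_2=x_{j+1}$, $d_1=w^N_j$,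 $d_2=w^N_{j+1}$, let $q$ be the cubic with $q(0)=p_1$, $q(1)=p_2$, $q'(0)=d_1$, $q'(1)=d_2$, and let $v(t)=q'(t)=(6p_1-6p_2+3d_1+3d_2)t^2+(-6p_1+6p_2-4d_1-2d_2)t+d_1$ for $t\in[0,1]$. For $0\le m\le r$ put $v_m=v(m/r)$ and $u_m=u^M_{jr+m}$ (the fine solution at time step $M$ at the fine node $x_j+mk$). *)

(* Defs.v *)
From Stdlib Require Import Reals ZArith Lra Lia.
From Coquelicot Require Import Coquelicot.
Open Scope R_scope.

Definition cont_diff1 (F : R -> R) : Prop :=
  (forall x, ex_derive F x) /\ (forall x, continuous (Derive F) x).

Fixpoint efc (F : R -> R) (eta tau : R) (z0 : Z -> R) (n : nat) : Z -> R :=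
  match n with
  | O => z0
  | S n' => fun i =>
      let z := efc F eta tau z0 n' in
      z i - Derive F (z i) * (tau / (2 * eta)) * (z (i + 1)%Z - z (i - 1)%Z)
  end.

Definition CFL (F : R -> R) (eta tau : R) (z0 : Z -> R) : Prop :=
  forall (n : nat) (i : Z), Rabs (Derive F (efc F eta tau z0 n i)) * tau / eta <= 1.

(* v(t) = q'(t) for the cubic Hermite q with q(0)=p1, q(1)=p2, q'(0)=d1, q'(1)=d2 *)
Definition vH (p1 p2 d1 d2 t : R) : R :=
  (6*p1 - 6*p2 + 3*d1 + 3*d2) * t ^ 2 + (- 6*p1 + 6*p2 - 4*d1 - 2*d2) * t + d1.

(* Main.v *)
Require Import Defs.
From Stdlib Require Import Reals ZArith Lra Lia.
From Coquelicot Require Import Coquelicot.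
Open Scope R_scope.

Lemma half_coef F eta tau z0 n i : 0 < eta -> 0 < tau -> CFL F eta tau z0 ->
  Rabs (Derive F (efc F eta tau z0 n i) * (tau / (2 * eta))) <= / 2.
Proof.
  intros He Ht H. specialize (H n i).
  rewrite Rabs_mult, (Rabs_right (tau / (2 * eta))).
  - set (D := Rabs _) in *.
    replace (D * (tau / (2 * eta))) with ((D * tau / eta) / 2) by (field; lra). lra.
  - apply Rle_ge; left; apply Rdiv_lt_0_compat; lra.
Qed.

Lemma abs3 x y z a b c : Rabs x <= a -> Rabs y <= b -> Rabs z <= c ->
  Rabs (x + y - z) <= a + b + c.
Proof.
  intros. unfold Rminus. eapply Rle_trans; [apply Rabs_triang|].
  rewrite Rabs_Ropp. eapply Rle_trans; [apply Rplus_le_compat_r; apply Rabs_triang|]. lra.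
Qed.

Lemma abs3' x y z : Rabs (x - y + z) <= Rabs x + Rabs y + Rabs z.
Proof.
  eapply Rle_trans; [apply Rabs_triang|]. unfold Rminus.
  pose proof (Rabs_triang x (- y)). rewrite Rabs_Ropp in H. lra.
Qed.

Lemma step_bounds F eta tau z0 n d : 0 < eta -> 0 < tau -> CFL F eta tau z0 ->
  (forall i, Rabs (efc F eta tau z0 n i - efc F eta tau z0 n (i + 1)%Z) <= d) ->
  (forall i, Rabs (efc F eta tau z0 (S n) i - efc F eta tau z0 n i) <= d) /\
  (forall i, Rabs (efc F eta tau z0 (S n) i - efc F eta tau z0 (S n) (i + 1)%Z) <= 3 * d).
Proof.
  intros He Ht HC Hd.
  assert (Hs : forall i, Rabs (efc F eta tau z0 (S n) i - efc F eta tau z0 n i) <= d).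
  { intro i. simpl.
    set (z := efc F eta tau z0 n).
    pose proof (half_coef F eta tau z0 n i He Ht HC) as Hc. fold z in Hc.
    set (c := Derive F (z i) * (tau / (2 * eta))) in *.
    replace (z i - c * (z (i + 1)%Z - z (i - 1)%Z) - z i)
      with (- (c * (z (i + 1)%Z - z (i - 1)%Z))) by ring.
    rewrite Rabs_Ropp, Rabs_mult.
    assert (H1 := Hd i). assert (H2 := Hd (i - 1)%Z).
    replace (i - 1 + 1)%Z with i in H2 by ring. fold z in H1, H2.
    assert (Rabs (z (i + 1)%Z - z (i - 1)%Z) <= 2 * d).
    { replace (z (i + 1)%Z - z (i - 1)%Z) with (-(z i - z (i+1)%Z) - (z (i-1)%Z - z i)) by ring.
      eapply Rle_trans; [apply Rabs_triang|]. rewrite Rabs_Ropp, Rabs_Ropp. lra. }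
    assert (0 <= Rabs c) by apply Rabs_pos.
    assert (0 <= Rabs (z (i + 1)%Z - z (i - 1)%Z)) by apply Rabs_pos.
    nra. }
  split; [exact Hs|].
  intro i.
  replace (efc F eta tau z0 (S n) i - efc F eta tau z0 (S n) (i + 1)%Z) with
    ((efc F eta tau z0 (S n) i - efc F eta tau z0 n i) +
     (efc F eta tau z0 n i - efc F eta tau z0 n (i + 1)%Z) -
     (efc F eta tau z0 (S n) (i+1)%Z - efc F eta tau z0 n (i+1)%Z)) by ring.
  replace (3 * d) with (d + d + d) by ring.
  apply abs3; [apply Hs | apply Hd | apply Hs].
Qed.

Lemma diff_bound F eta tau z0 d0 : 0 < eta -> 0 < tau -> CFL F eta tau z0 ->
  (forall i, Rabs (z0 i - z0 (i + 1)%Z) <= d0) ->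
  forall n i, Rabs (efc F eta tau z0 n i - efc F eta tau z0 n (i + 1)%Z) <= d0 * 3 ^ n.
Proof.
  intros He Ht HC H0 n. induction n as [|n IH]; intro i.
  - simpl. rewrite Rmult_1_r. apply H0.
  - destruct (step_bounds F eta tau z0 n (d0 * 3 ^ n) He Ht HC IH) as [_ H].
    replace (d0 * 3 ^ S n) with (3 * (d0 * 3 ^ n)) by (simpl; ring). apply H.
Qed.

Lemma drift F eta tau z0 d0 : 0 < eta -> 0 < tau -> CFL F eta tau z0 ->
  (forall i, Rabs (z0 i - z0 (i + 1)%Z) <= d0) ->
  forall n i, Rabs (efc F eta tau z0 n i - z0 i) <= d0 * (3 ^ n - 1) / 2.
Proof.
  intros He Ht HC H0 n. induction n as [|n IH]; intro i.
  - simpl. replace (z0 i - z0 i) with 0 by ring. rewrite Rabs_R0. lra.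
  - destruct (step_bounds F eta tau z0 n (d0 * 3 ^ n) He Ht HC
      (diff_bound F eta tau z0 d0 He Ht HC H0 n)) as [H _].
    replace (efc F eta tau z0 (S n) i - z0 i) with
      ((efc F eta tau z0 (S n) i - efc F eta tau z0 n i) + (efc F eta tau z0 n i - z0 i)) by ring.
    eapply Rle_trans; [apply Rabs_triang|].
    pose proof (H i). pose proof (IH i).
    replace (d0 * (3 ^ S n - 1) / 2) with (d0 * 3 ^ n + d0 * (3 ^ n - 1) / 2) by (simpl; field). lra.
Qed.

Lemma telescope (g : Z -> R) d : (forall i, Rabs (g i - g (i + 1)%Z) <= d) ->
  forall (m : nat) i, Rabs (g i - g (i + Z.of_nat m)%Z) <= INR m * d.
Proof.
  intros H m. induction m as [|m IH]; intro i.
  - simpl. replace (i + 0)%Z with i by ring. replace (g i - g i) with 0 by ring.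
    rewrite Rabs_R0. lra.
  - rewrite Nat2Z.inj_succ, S_INR.
    replace (i + Z.succ (Z.of_nat m))%Z with ((i + Z.of_nat m) + 1)%Z by lia.
    replace (g i - g (i + Z.of_nat m + 1)%Z) with
      ((g i - g (i + Z.of_nat m)%Z) + (g (i + Z.of_nat m)%Z - g (i + Z.of_nat m + 1)%Z)) by ring.
    eapply Rle_trans; [apply Rabs_triang|].
    pose proof (IH i). pose proof (H (i + Z.of_nat m)%Z). lra.
Qed.

Lemma pow_lin X r : 3 <= X -> (1 <= r)%nat -> INR r * X <= X ^ r.
Proof.
  intros HX Hr. induction r as [|r IH]; [lia|].
  destruct (Nat.eq_dec r 0) as [->|Hr0]; [simpl; lra|].
  assert (H1 : INR r * X <= X ^ r) by (apply IH; lia).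
  assert (1 <= INR r) by (apply (le_INR 1); lia).
  rewrite S_INR. simpl.
  assert (X * (INR r * X) <= X * X ^ r) by (apply Rmult_le_compat_l; lra).
  assert (INR r * X * (X - 3) >= 0).
  { apply Rle_ge. apply Rmult_le_pos; nra. }
  nra.
Qed.

Lemma coef_sum t : 0 <= t <= 1 ->
  Rabs ((1 - t) * (1 - 3 * t)) + Rabs (t * (3 * t - 2)) + Rabs (6 * t * (1 - t)) <= 2.
Proof.
  intros Ht.
  rewrite (Rabs_right (6 * t * (1 - t))) by nra.
  destruct (Rcase_abs ((1 - t) * (1 - 3 * t))) as [H1|H1];
  destruct (Rcase_abs (t * (3 * t - 2))) as [H2|H2];
  try rewrite (Rabs_left _ H1); try rewrite (Rabs_right _ H1);
  try rewrite (Rabs_left _ H2); try rewrite (Rabs_right _ H2).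
  all: try nra.
  assert (0 <= (2 * t - 1) ^ 2) by apply pow2_ge_0. nra.
Qed.

Lemma interp_bound t x y z E : 0 <= t <= 1 -> Rabs x <= E -> Rabs y <= E -> Rabs z <= E ->
  Rabs ((1 - t) * (1 - 3 * t) * x + t * (3 * t - 2) * y + 6 * t * (1 - t) * z) <= 2 * E.
Proof.
  intros Ht Hx Hy Hz.
  pose proof (coef_sum t Ht).
  eapply Rle_trans; [apply Rabs_triang|].
  eapply Rle_trans; [apply Rplus_le_compat_r; apply Rabs_triang|].
  rewrite (Rabs_mult ((1 - t) * (1 - 3 * t)) x), (Rabs_mult (t * (3 * t - 2)) y),
    (Rabs_mult (6 * t * (1 - t)) z).
  assert (0 <= E) by (pose proof (Rabs_pos x); lra).
  pose proof (Rabs_pos ((1 - t) * (1 - 3 * t))).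
  pose proof (Rabs_pos (t * (3 * t - 2))).
  pose proof (Rabs_pos (6 * t * (1 - t))).
  apply Rle_trans with (Rabs ((1 - t) * (1 - 3 * t)) * E + Rabs (t * (3 * t - 2)) * E
     + Rabs (6 * t * (1 - t)) * E).
  - repeat apply Rplus_le_compat; apply Rmult_le_compat_l; auto.
  - nra.
Qed.

Theorem theorem1
  (F : R -> R) (HF : cont_diff1 F)
  (a h Dt : R) (Hh : 0 < h) (HDt : 0 < Dt)
  (N r : nat) (HN : (1 < N)%nat) (Hr2 : (2 <= r)%nat) (Hreven : Nat.Even r)
  (u0 : R -> R)
  (HCFLc : CFL F h Dt (fun j => u0 (a + IZR j * h)))
  (HCFLf : CFL F (h / INR r) (Dt / INR r) (fun i => u0 (a + IZR i * (h / INR r))))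
  (eps : R) (Heps : 0 < eps) (j : Z) (m : nat) (Hm1 : (1 <= m)%nat) (Hmr : (m <= r)%nat)
  (Hu0 : forall i : Z,
      Rabs (u0 (a + IZR i * (h / INR r)) - u0 (a + IZR (i + 1) * (h / INR r)))
        <= eps / 3 ^ (N * r)) :
  let k := h / INR r in
  let dt := Dt / INR r in
  let M := (N * r)%nat in
  let w := efc F h Dt (fun j => u0 (a + IZR j * h)) in
  let u := efc F k dt (fun i => u0 (a + IZR i * k)) in
  let p1 := a + IZR j * h in
  let p2 := a + IZR (j + 1) * h in
  let d1 := w N j in
  let d2 := w N (j + 1)%Z in
  let v_m := vH p1 p2 d1 d2 (INR m / INR r) in
  let u_m := u M (j * Z.of_nat r + Z.of_nat m)%Z in
  Rabs (v_m - u_m) <= 3 / 2 * h + 3 / 4 * Rabs (d1 + d2)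
                      + (INR (Nat.min m (r - m)) + 3) * eps.
Proof.
  intros k dt M w u p1 p2 d1 d2 v_m u_m.
  assert (Hr0 : 0 < INR r) by (apply lt_0_INR; lia).
  assert (Hk : 0 < k) by (unfold k; apply Rdiv_lt_0_compat; lra).
  assert (Hdt : 0 < dt) by (unfold dt; apply Rdiv_lt_0_compat; lra).
  set (g := fun i => u0 (a + IZR i * k)).
  set (X := 3 ^ N).
  assert (HX : 3 <= X).
  { unfold X. destruct N as [|N']; [lia|]. simpl.
    assert (1 <= 3 ^ N') by (apply pow_R1_Rle; lra). lra. }
  assert (HM : 3 ^ M = X ^ r) by (unfold M, X; apply pow_mult).
  set (df := eps / 3 ^ M).
  assert (HXr : INR r * X <= X ^ r) by (apply pow_lin; [lra | lia]).
  assert (HXr0 : 0 < X ^ r) by (apply pow_lt; lra).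
  assert (Hdf : INR r * df * X <= eps).
  { unfold df. rewrite HM.
    replace (INR r * (eps / X ^ r) * X) with (eps * (INR r * X / X ^ r)) by (field; lra).
    assert (INR r * X / X ^ r <= 1).
    { apply (Rmult_le_reg_r (X ^ r)); auto. field_simplify; lra. }
    nra. }
  assert (Hdf0 : 0 <= df) by (unfold df; apply Rlt_le, Rdiv_lt_0_compat; [lra| apply pow_lt; lra]).
  assert (Hrdf : INR r * df <= eps / 3).
  { assert (0 <= INR r * df) by (apply Rmult_le_pos; lra). nra. }
  assert (Hg : forall i, Rabs (g i - g (i + 1)%Z) <= df) by (intro i; apply Hu0).
  assert (Hfine : forall i, Rabs (u M i - g i) <= eps / 2).
  { intro i. eapply Rle_trans.
    - apply (drift F k dt g df Hk Hdt HCFLf Hg M i).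
    - unfold df. rewrite HM. 
      replace (eps / X ^ r * (X ^ r - 1) / 2) with (eps / 2 - eps / X ^ r / 2) by (field; lra).
      assert (0 < eps / X ^ r) by (apply Rdiv_lt_0_compat; lra). lra. }
  assert (Hw0 : forall j', u0 (a + IZR j' * h) = g (j' * Z.of_nat r)%Z).
  { intro j'. unfold g, k. f_equal. rewrite mult_IZR, <- INR_IZR_INZ. field. lra. }
  assert (Hcd : forall j', Rabs (u0 (a + IZR j' * h) - u0 (a + IZR (j' + 1) * h)) <= INR r * df).
  { intro j'. rewrite !Hw0.
    replace ((j' + 1) * Z.of_nat r)%Z with (j' * Z.of_nat r + Z.of_nat r)%Z by ring.
    apply telescope; exact Hg. }
  assert (Hcoarse : forall j', Rabs (w N j' - g (j' * Z.of_nat r)%Z) <= eps / 2).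
  { intro j'. rewrite <- Hw0. eapply Rle_trans.
    - apply (drift F h Dt (fun j => u0 (a + IZR j * h)) (INR r * df) Hh HDt HCFLc Hcd N j').
    - fold X. assert (0 <= INR r * df) by (apply Rmult_le_pos; lra). nra. }
  assert (Hoff1 : Rabs (g (j * Z.of_nat r)%Z - g (j * Z.of_nat r + Z.of_nat m)%Z) <= eps / 3).
  { eapply Rle_trans; [apply telescope; exact Hg|].
    assert (INR m <= INR r) by (apply le_INR; lia).
    eapply Rle_trans; [|exact Hrdf]. apply Rmult_le_compat_r; lra. }
  assert (Hoff2 : Rabs (g ((j + 1) * Z.of_nat r)%Z - g (j * Z.of_nat r + Z.of_nat m)%Z) <= eps / 3).
  { rewrite Rabs_minus_sym.
    replace ((j + 1) * Z.of_nat r)%Z with (j * Z.of_nat r + Z.of_nat m + Z.of_nat (r - m))%Z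
      by (rewrite Nat2Z.inj_sub; [ring | lia]).
    eapply Rle_trans; [apply telescope; exact Hg|].
    assert (INR (r - m) <= INR r) by (apply le_INR; lia).
    eapply Rle_trans; [|exact Hrdf]. apply Rmult_le_compat_r; lra. }
  assert (E1 : Rabs (d1 - u_m) <= 4 / 3 * eps).
  { unfold d1, u_m.
    replace (w N j - u M (j * Z.of_nat r + Z.of_nat m)%Z) with
      ((w N j - g (j * Z.of_nat r)%Z) + (g (j * Z.of_nat r)%Z - g (j * Z.of_nat r + Z.of_nat m)%Z)
       - (u M (j * Z.of_nat r + Z.of_nat m)%Z - g (j * Z.of_nat r + Z.of_nat m)%Z)) by ring.
    eapply Rle_trans; [apply abs3; [apply Hcoarse | apply Hoff1 | apply Hfine]|]. lra. }
  assert (E2 : Rabs (d2 - u_m) <= 4 / 3 * eps).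
  { unfold d2, u_m.
    replace (w N (j + 1)%Z - u M (j * Z.of_nat r + Z.of_nat m)%Z) with
      ((w N (j + 1)%Z - g ((j + 1) * Z.of_nat r)%Z) + (g ((j + 1) * Z.of_nat r)%Z - g (j * Z.of_nat r + Z.of_nat m)%Z)
       - (u M (j * Z.of_nat r + Z.of_nat m)%Z - g (j * Z.of_nat r + Z.of_nat m)%Z)) by ring.
    eapply Rle_trans; [apply abs3; [apply Hcoarse | apply Hoff2 | apply Hfine]|]. lra. }
  assert (E3 : Rabs ((d1 + d2) / 2 - u_m) <= 4 / 3 * eps).
  { replace ((d1 + d2) / 2 - u_m) with ((d1 - u_m) / 2 + (d2 - u_m) / 2) by field.
    eapply Rle_trans; [apply Rabs_triang|].
    unfold Rdiv. rewrite !Rabs_mult, (Rabs_right (/ 2)) by lra. lra. }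
  set (t := INR m / INR r) in *.
  assert (Ht : 0 <= t <= 1).
  { unfold t. assert (INR m <= INR r) by (apply le_INR; lia).
    pose proof (pos_INR m). split.
    - apply Rdiv_le_0_compat; lra.
    - apply (Rmult_le_reg_r (INR r)); auto. field_simplify; lra. }
  assert (Hp : p2 = p1 + h) by (unfold p1, p2; rewrite plus_IZR; ring).
  assert (Hid : v_m - u_m = ((1 - t) * (1 - 3 * t) * (d1 - u_m) + t * (3 * t - 2) * (d2 - u_m)
      + 6 * t * (1 - t) * ((d1 + d2) / 2 - u_m)) - 3 * t * (1 - t) * (d1 + d2)
      + 6 * h * t * (1 - t)).
  { unfold v_m, vH. rewrite Hp. field. }
  rewrite Hid.
  pose proof (interp_bound t _ _ _ _ Ht E1 E2 E3).
  assert (Hc : 0 <= t * (1 - t) <= 1 / 4).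
  { assert (0 <= (2 * t - 1) ^ 2) by apply pow2_ge_0. nra. }
  assert (Rabs (3 * t * (1 - t) * (d1 + d2)) <= 3 / 4 * Rabs (d1 + d2)).
  { rewrite Rabs_mult. rewrite (Rabs_right (3 * t * (1 - t))) by nra.
    pose proof (Rabs_pos (d1 + d2)). nra. }
  assert (Rabs (6 * h * t * (1 - t)) <= 3 / 2 * h).
  { rewrite Rabs_right by nra. nra. }
  pose proof (pos_INR (Nat.min m (r - m))).
  eapply Rle_trans; [apply abs3'|].
  assert (0 <= INR (Nat.min m (r - m)) * eps) by (apply Rmult_le_pos; lra). lra.
Qed.
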